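(* Let $n\ge1$, $D\ge1$, and let $X_n=\{\mathbf{x}^0,\ldots,\mathbf{x}^{n-1}\}\subseteq\{0,1\}^D$ consist of $n$ pairwise distinct vectors, indexed so that $\mathbf{a}\cdot\mathbf{x}^0<\mathbf{a}\cdot\mathbf{x}^1<\cdots<\mathbf{a}\cdot\mathbf{x}^{n-1}$ for some $\mathbf{a}\in\mathbb{Z}^D$. Let $r=\lceil\sqrt n\rceil$. Then there is a three-layer Boolean threshold network with $D$ input nodes, $r+D$ hidden nodes and $2r$ output nodes that maps each $\mathbf{x}^i$ to the concatenation $(\mathbf{h}^k[r],\mathbf{h}^\ell[r])\in\{0,1\}^{2r}$, where $k,\ell$ are the integers with $i=kr+\ell$ and $0\le\ell<r$.
   Context: For integers $0\le i<s$, the step vector $\mathbf{h}^i[s]\in\{0,1\}^s$ has $\mathbf{h}^i[s]_j=1$ for $0\le j\le i$ and $0$ for $i<j<s$. A Boolean threshold function is a map $\{0,1\}^h\to\{0,1\}$, $\mathbf{u}\mapsto[\mathbf{w}\cdot\mathbf{u}\ge\theta]$ (value $1$ iff $\mathbf{w}\cdot\mathbf{u}\ge\theta$) with $\mathbf{w}\in\mathbb{Z}^h,\theta\in\mathbb{Z}$. An $L$-layer Boolean threshold network has layers $1,\ldots,L$; layer $1$ is the input; each node of layer $t+1$ computes a Boolean threshold function of the values of layer $t$; the network computes the map input $\mapsto$ values of layer $L$; layers $2,\ldots,L-1$ are hidden. *)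

(* Defs.v *)
From mathcomp Require Import all_boot all_order all_algebra.
Set Implicit Arguments. Unset Strict Implicit. Unset Printing Implicit Defensive.
Import Order.TTheory GRing.Theory Num.Theory.
Local Open Scope ring_scope.

Definition dotb (h : nat) (w : 'I_h -> int) (u : 'I_h -> bool) : int :=
  \sum_(j < h) w j * (u j)%:R.

Definition threshold (h : nat) (w : 'I_h -> int) (theta : int)
  (u : 'I_h -> bool) : bool := theta <= dotb w u.

Definition net3 (D H O : nat) (W1 : 'I_H -> 'I_D -> int) (t1 : 'I_H -> int)
  (W2 : 'I_O -> 'I_H -> int) (t2 : 'I_O -> int) (x : 'I_D -> bool) : 'I_O -> bool :=
  fun o => threshold (W2 o) (t2 o) (fun j => threshold (W1 j) (t1 j) x).

(* Step vector h^i[s]: entry j is 1 iff j <= i. *)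
Definition stepv (s i : nat) : 'I_s -> bool := fun j => (j <= i)%N.

Definition concatb (m p : nat) (u : 'I_m -> bool) (v : 'I_p -> bool)
  : 'I_(m + p) -> bool :=
  fun o => match split o with inl a => u a | inr b => v b end.

Lemma ceil_sqrt_ex (n : nat) : exists r, (n <= r * r)%N.
Proof. by exists n; case: n => // n; rewrite leq_pmulr. Qed.

Definition ceil_sqrt (n : nat) : nat := ex_minn (ceil_sqrt_ex n).

(* Main.v *)
Require Import Defs.
From mathcomp Require Import all_boot all_order all_algebra.
Import Order.TTheory GRing.Theory Num.Theory.
Local Open Scope ring_scope.

Lemma split_l (m p : nat) (k : 'I_m) : split (lshift p k) = inl k.
Proof. exact: (unsplitK (inl k)). Qed.
Lemma split_r (m p : nat) (k : 'I_p) : split (rshift m k) = inr k.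
Proof. exact: (unsplitK (inr k)). Qed.

Lemma dot_unit (D : nat) (d : 'I_D) (u : 'I_D -> bool) :
  dotb (fun d' => if d' == d then 1 else 0) u = (u d)%:R.
Proof.
rewrite /dotb (bigD1 d) //= eqxx mul1r big1 ?addr0 // => j /negbTE ->.
by rewrite mul0r.
Qed.

Lemma eq_dotb (h : nat) (w : 'I_h -> int) (u v : 'I_h -> bool) :
  u =1 v -> dotb w u = dotb w v.
Proof. by move=> e; apply: eq_bigr => j _; rewrite e. Qed.

Theorem theorem12 (n D : nat) (hn : (1 <= n)%N) (hD : (1 <= D)%N)
  (x : 'I_n -> ('I_D -> bool)) (a : 'I_D -> int)
  (hinj : injective x)
  (hord : forall i j : 'I_n, (i < j)%N -> dotb a (x i) < dotb a (x j)) :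
  let r := ceil_sqrt n in
  exists (W1 : 'I_(r + D) -> 'I_D -> int) (t1 : 'I_(r + D) -> int)
         (W2 : 'I_(r + r) -> 'I_(r + D) -> int) (t2 : 'I_(r + r) -> int),
    forall i : 'I_n,
      net3 W1 t1 W2 t2 (x i) =1 concatb (@stepv r (i %/ r)%N) (@stepv r (i %% r)%N).
Proof.
move=> r.
have hr : (n <= r * r)%N by rewrite /r /ceil_sqrt; case: ex_minnP.
have r0 : (0 < r)%N by case: (r) hr => //; rewrite muln0 leqn0 => /eqP n0; rewrite n0 in hn.
have ltl : (n.-1 < n)%N by rewrite ltn_predL.
pose last := Ordinal ltl.
pose v (i : 'I_n) := dotb a (x i).
pose V (m : nat) : int := if insub m is Some i then v i else v last + 1.
have vmono : forall i j : 'I_n, (i <= j)%N -> v i <= v j.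
  move=> i j; rewrite leq_eqVlt => /orP[/eqP/val_inj -> //|/hord/ltW //].
have key : forall (i : 'I_n) m, (V m <= v i) = (m <= i)%N.
  move=> i m; rewrite /V; case: insubP => [j _ <-|].
    case: (ltngtP j i) => h.
    - by rewrite (ltW (hord _ _ h)).
    - by apply/negbTE; rewrite -ltNge; apply: hord.
    - by rewrite (val_inj h) lexx.
  rewrite -leqNgt => nm.
  have -> : (m <= i)%N = false by apply/negbTE; rewrite -ltnNge (leq_trans _ nm).
  apply/negbTE; rewrite -ltNge (le_lt_trans (vmono i last _)) ?ltrDl //=.
  by rewrite -ltnS prednK // (leq_trans _ hn).
pose W1 (j : 'I_(r + D)) : 'I_D -> int :=
  match split j with inl k => a | inr d => fun d' => if d' == d then 1 else 0 end.
pose t1 (j : 'I_(r + D)) : int :=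
  match split j with inl k => V (k * r)%N | inr d => 1 end.
pose g (l : nat) (k : nat) := V (k * r + l)%N.
pose w (l : nat) (k : nat) : int := if k is k'.+1 then g l k' - g l k else 0.
pose W2 (o : 'I_(r + r)) : 'I_(r + D) -> int :=
  match split o with
  | inl k => fun j => if j == lshift D k then 1 else 0
  | inr l => fun j => match split j with inl k => w l k | inr d => a d end
  end.
pose t2 (o : 'I_(r + r)) : int :=
  match split o with inl k => 1 | inr l => V l end.
exists W1, t1, W2, t2 => i o.
have hid : (fun j => threshold (W1 j) (t1 j) (x i)) =1
    (fun j => match split j with inl k => (k <= i %/ r)%N | inr d => x i d end).
  move=> j; rewrite /threshold /W1 /t1; case: (split j) => [k|d].
    by rewrite key leq_divRL.
  by rewrite dot_unit; case: (x i d).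
rewrite /net3 /concatb -(splitK o); case: (split o) => [k|l] /=;
  rewrite /threshold /W2 /t2 /= ?split_l ?split_r (@eq_dotb _ _ _ _ hid).
  by rewrite dot_unit split_l /stepv; case: (k <= i %/ r)%N.
have qr : (i %/ r < r)%N by rewrite ltn_divLR // (leq_trans _ hr).
rewrite /dotb big_split_ord /=.
under eq_bigr do rewrite split_l.
under [X in _ + X]eq_bigr do rewrite split_r.
have -> : \sum_(k < r) w l k * (k <= i %/ r)%N%:R = V l - V (i %/ r * r + l)%N.
  rewrite -(big_mkord xpredT (fun k => w l k * (k <= i %/ r)%N%:R)).
  rewrite (big_cat_nat (n := (i %/ r).+1)) //= [X in _ + X]big1_seq ?addr0; last first.
    move=> k /andP[_]; rewrite mem_index_iota => /andP[h _].
    by rewrite leqNgt h mulr0.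
  rewrite big_nat_recl //= mul0r add0r.
  rewrite (eq_big_nat _ _ (F2 := fun k => g l k - g l k.+1)); last first.
    by move=> k /andP[_ ->]; rewrite mulr1.
  rewrite -[LHS]opprK -sumrN.
  under eq_bigr do rewrite opprB.
  by rewrite telescope_sumr // opprB /g.
rewrite -addrA lerDl addrC subr_ge0.
have := key i (i %/ r * r + l)%N; rewrite /v /dotb => ->; rewrite /stepv.
by rewrite {2}(divn_eq i r) leq_add2l.
Qed.
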